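(* Let $X$ be a quasi-lattice and $x,y,z\in X$. Then: (1) $x\tilde\vee x=x\tilde\wedge x=x$. (2) For $\alpha\ge0$, $(\alpha x)\tilde\vee(\alpha y)=\alpha(x\tilde\vee y)$ and $(\alpha x)\tilde\wedge(\alpha y)=\alpha(x\tilde\wedge y)$. (3) For $\alpha\le 0$, $(\alpha x)\tilde\vee(\alpha y)=\alpha(x\tilde\wedge y)$ and $(\alpha x)\tilde\wedge(\alpha y)=\alpha(x\tilde\vee y)$. (4) $(x\tilde\vee y)+z=(x+z)\tilde\vee(y+z)$ and $(x\tilde\wedge y)+z=(x+z)\tilde\wedge(y+z)$. (5) $x^{\pm}\ge0$ and $x^-=(-x)^+$. (6) $\lceil x\rceil\ge0$ and $\lceil\alpha x\rceil=|\alpha|\lceil x\rceil$ for all $\alpha\in\mathbb R$; in particular $\lceil -x\rceil=\lceil x\rceil$. (7) $x=x^+-x^-$, $x^+\tilde\wedge x^-=0$ and $\lceil x\rceil=x^++x^-$. (8) If $x\ge0$, then $x\tilde\wedge 0=0$ and $x=x^+=\lceil x\rceil$. (9) $\lceil\lceil x\rceil\rceil=\lceil x\rceil$. (10) $x\tilde\vee y+x\tilde\wedge y=x+y$ and $x\tilde\vee y-x\tilde\wedge y=\lceil x-y\rceil$. (11) $x\tilde\vee y=\frac12(x+y)+\frac12\lceil x-y\rceil$ and $x\tilde\wedge y=\frac12(x+y)-\frac12\lceil x-y\rceil$.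
   Context: A pre-ordered Banach space is a real Banach space $X$ with a cone $X_+$ ($X_++X_+\subseteq X_+$, $\lambda X_+\subseteq X_+$ for $\lambda\ge0$); $x\le y$ means $y-x\in X_+$. For $A\subseteq X$, $\upsilon(A)$ is the set of upper bounds of $A$ and $\mu(A)$ the set of minimal upper bounds ($z\in\upsilon(A)$ with: $A\le w\le z$ implies $w=z$). Let $\sigma_{x,y}(z)=\|z-x\|+\|z-y\|$. A pre-ordered Banach space with closed cone is a $\upsilon$-quasi-lattice (resp. $\mu$-quasi-lattice) if for all $x,y$ the set $\upsilon(\{x,y\})$ (resp. $\mu(\{x,y\})$) is non-empty and contains a unique minimizer of $\sigma_{x,y}$ over that set, called the quasi-supremum $x\tilde\vee y$. A quasi-lattice is either a $\upsilon$- or a $\mu$-quasi-lattice, with $x\tilde\vee y$ the corresponding quasi-supremum. Define $x\tilde\wedge y:=-((-x)\tilde\vee(-y))$, $\lceil x\rceil:=(-x)\tilde\vee x$, $x^+:=0\tilde\vee x$, $x^-:=0\tilde\vee(-x)$. *)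

(* Defs.v *)
From HB Require Import structures.
From mathcomp Require Import all_boot all_order all_algebra.
From mathcomp Require Import all_classical all_reals all_analysis.
Set Implicit Arguments. Unset Strict Implicit. Unset Printing Implicit Defensive.
Import Order.TTheory GRing.Theory Num.Theory.
Import numFieldNormedType.Exports.
Local Open Scope classical_set_scope.
Local Open Scope ring_scope.

Section QL.
Context {R : realType} {X : completeNormedModType R}.

Definition is_cone (C : set X) : Prop :=
  (forall u v, C u -> C v -> C (u + v)) /\
  (forall (l : R) u, 0 <= l -> C u -> C (l *: u)).

Definition cle (C : set X) (x y : X) : Prop := C (y - x).

Definition ubs (C : set X) (x y : X) : set X :=
  [set z | cle C x z /\ cle C y z].

Definition mubs (C : set X) (x y : X) : set X :=
  [set z | ubs C x y z /\
           (forall w, ubs C x y w -> cle C w z -> w = z)].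

Definition sigma (x y z : X) : R := `|z - x| + `|z - y|.

Definition unique_minimizer (S : set X) (x y z : X) : Prop :=
  S z /\ (forall w, S w -> sigma x y z <= sigma x y w) /\
  (forall w, S w -> sigma x y w <= sigma x y z -> w = z).

(* the bound set: mu = false -> upsilon(x,y), mu = true -> mu(x,y) *)
Definition bset (C : set X) (mu : bool) (x y : X) : set X :=
  if mu then mubs C x y else ubs C x y.

(* X (with closed cone C) is a upsilon-/mu-quasi-lattice with quasi-supremum jn:
   for all x y, jn x y is the unique minimizer of sigma_{x,y} over the bound set
   (this includes non-emptiness and existence/uniqueness of the minimizer). *)
Definition quasi_lattice (C : set X) (mu : bool) (jn : X -> X -> X) : Prop :=
  is_cone C /\ closed C /\
  forall x y, unique_minimizer (bset C mu x y) x y (jn x y).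

Definition qmeet (jn : X -> X -> X) (x y : X) : X := - jn (- x) (- y).
Definition qceil (jn : X -> X -> X) (x : X) : X := jn (- x) x.
Definition qpos (jn : X -> X -> X) (x : X) : X := jn 0 x.
Definition qneg (jn : X -> X -> X) (x : X) : X := jn 0 (- x).

End QL.

(* Main.v *)
Require Import Defs.
From HB Require Import structures.
From mathcomp Require Import all_boot all_order all_algebra.
From mathcomp Require Import all_classical all_reals all_analysis.
Import Order.TTheory GRing.Theory Num.Theory.
Import numFieldNormedType.Exports.
Local Open Scope classical_set_scope.
Local Open Scope ring_scope.
Set Implicit Arguments. Unset Strict Implicit.

Section Aux.
Context {R : realType} {X : completeNormedModType R}.
Variables (C : set X) (mu : bool) (jn : X -> X -> X).
Hypothesis HQ : quasi_lattice C mu jn.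

Definition aff (a : R) (b w : X) : X := a *: w + b.

Lemma cone0 u : C u -> C 0.
Proof. case: HQ => [[_ hs] _] hu. by rewrite -(scale0r u); apply: hs. Qed.

Lemma cle_aff a b u v : 0 < a -> cle C u v -> cle C (aff a b u) (aff a b v).
Proof.
case: HQ => [[_ hs] _] ha; rewrite /cle /aff.
have -> : (a*:v+b) - (a*:u+b) = a*:(v-u)
  by rewrite scalerBr opprD addrACA subrr addr0.
by apply: hs; rewrite ltW.
Qed.

Lemma affK a b w : 0 < a -> aff a^-1 (-(a^-1 *: b)) (aff a b w) = w.
Proof.
move=> ha; rewrite /aff scalerDr scalerA mulVf ?gt_eqF // scale1r addrK //.
Qed.

Lemma affVK a b w : 0 < a -> aff a b (aff a^-1 (-(a^-1 *: b)) w) = w.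
Proof.
move=> ha; rewrite /aff scalerDr scalerN !scalerA divff ?gt_eqF // !scale1r subrK //.
Qed.

Lemma sigma_aff a b x y w : 0 < a ->
  sigma (aff a b x) (aff a b y) (aff a b w) = a * sigma x y w.
Proof.
move=> ha; rewrite /sigma /aff.
have E : forall u v : X, (a*:u+b) - (a*:v+b) = a*:(u-v)
  by move=> u v; rewrite scalerBr opprD addrACA subrr addr0.
by rewrite !E !normrZ gtr0_norm // mulrDr.
Qed.

Lemma bset_aff a b x y w : 0 < a -> bset C mu x y w ->
  bset C mu (aff a b x) (aff a b y) (aff a b w).
Proof.
move=> ha; rewrite /bset; case: mu.
  move=> [[h1 h2] hmin]; split; first by split; apply: cle_aff.
  move=> w' [h1' h2'] hle.
  have hai : 0 < a^-1 by rewrite invr_gt0.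
  have H : aff a^-1 (-(a^-1 *: b)) w' = w.
    apply: hmin; first split.
    - by rewrite -{1}(affK b x ha); apply: cle_aff.
    - by rewrite -{1}(affK b y ha); apply: cle_aff.
    - by rewrite -(affK b w ha); apply: cle_aff.
  by rewrite -H affVK.
move=> [h1 h2]; split; by apply: cle_aff.
Qed.

Lemma jn_aff a b x y : 0 < a -> jn (aff a b x) (aff a b y) = aff a b (jn x y).
Proof.
move=> ha; case: HQ => [_ [_ hm]].
have [hz [hzmin _]] := hm x y.
have [hz' [hz'min hz'u]] := hm (aff a b x) (aff a b y).
symmetry; apply: hz'u; first exact: bset_aff.
have hai : 0 < a^-1 by rewrite invr_gt0.
rewrite sigma_aff // -(affVK b (jn (aff a b x) (aff a b y)) ha) sigma_aff //.
apply: ler_wpM2l; first exact: ltW.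
apply: hzmin.
have := bset_aff (-(a^-1 *: b)) hai hz'.
by rewrite !affK.
Qed.

Lemma bset_sym x y w : bset C mu x y w -> bset C mu y x w.
Proof.
rewrite /bset; case: mu; last by move=> [h1 h2].
move=> [[h1 h2] hmin]; split => // w' [h1' h2'] hle; exact: hmin.
Qed.

Lemma jn_sym x y : jn y x = jn x y.
Proof.
case: HQ => [_ [_ hm]].
have [hz [hzmin _]] := hm x y.
have [hz' [hz'min hz'u]] := hm y x.
symmetry; apply: hz'u; first exact: bset_sym.
rewrite /sigma addrC -/(sigma x y (jn x y)) (addrC `|_ - y|).
apply: hzmin; exact: bset_sym.
Qed.

Lemma jn_top x y : cle C x y -> jn x y = y.
Proof.
move=> hxy; have hyy : cle C y y by rewrite /cle subrr; apply: (cone0 hxy).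
case: HQ => [_ [_ hm]].
have [hz [hzmin hzu]] := hm x y.
move: hz hzmin hzu; rewrite /bset; case: mu.
  move=> [[h1 h2] hmin] _ _; symmetry; exact: hmin.
move=> [h1 h2] _ hu; symmetry; apply: hu => //.
rewrite /sigma subrr normr0 addr0.
have -> : y - x = (jn x y - x) - (jn x y - y)
  by rewrite [RHS]addrC opprB addrA subrK.
exact: ler_normB.
Qed.

Lemma two (v : X) : (2:R) *: v = v + v.
Proof. by rewrite scaler_nat mulr2n. Qed.

Lemma half (v : X) : (2:R)^-1 *: ((2:R) *: v) = v.
Proof. by rewrite scalerA mulVf ?scale1r // pnatr_eq0. Qed.

Lemma bset_ubs x y w : bset C mu x y w -> ubs C x y w.
Proof. by rewrite /bset; case: mu => // -[]. Qed.

Lemma jn_ubs x y : ubs C x y (jn x y).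
Proof. case: HQ => [_ [_ hm]]; have [hz _] := hm x y; exact: bset_ubs. Qed.

Lemma jn_self x : jn x x = x.
Proof.
have [h _] := jn_ubs x x; apply: jn_top.
by rewrite /cle subrr; apply: cone0 h.
Qed.

Lemma jn_tr x y z : jn (x + z) (y + z) = jn x y + z.
Proof. by have := jn_aff z x y ltr01; rewrite /aff !scale1r. Qed.

Lemma jn_scale0 a x y : 0 <= a -> jn (a *: x) (a *: y) = a *: jn x y.
Proof.
rewrite le0r => /orP [/eqP -> | ha]; first by rewrite !scale0r jn_self.
by have := jn_aff 0 x y ha; rewrite /aff !addr0.
Qed.

Lemma qmeet_tr x y z : qmeet jn (x + z) (y + z) = qmeet jn x y + z.
Proof. by rewrite /qmeet !opprD jn_tr opprD opprK. Qed.

Lemma cle_add u v u' w : cle C u v -> cle C u' w -> C ((v - u) + (w - u')).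
Proof. case: HQ => [[ha _] _]; exact: ha. Qed.

Lemma qm_eq x y : qmeet jn x y = (x + y) - jn x y.
Proof.
have e1 : y - (x+y) = -x by rewrite opprD addrCA subrr addr0.
have e2 : x - (x+y) = -y by rewrite opprD addrA subrr add0r.
have := jn_tr y x (-(x+y)); rewrite e1 e2 (jn_sym y x) /qmeet => ->.
by rewrite opprD opprK addrC.
Qed.

Lemma qc_eq x y : qceil jn (x - y) = (2:R) *: jn x y - (x + y).
Proof.
have := jn_aff (-(x+y)) x y (ltr0Sn R 1).
rewrite /aff => <-; rewrite /qceil jn_sym; congr jn.
- by rewrite two opprD addrACA subrr add0r.
- by rewrite two !opprD opprK addrACA subrr addr0 addrC.
Qed.

End Aux.

Theorem theorem5p8 (R : realType) (X : completeNormedModType R)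
  (C : set X) (mu : bool) (jn : X -> X -> X)
  (HQ : quasi_lattice C mu jn) :
  forall x y z : X,
  (* (1) *)
  (jn x x = x /\ qmeet jn x x = x) /\
  (* (2) *)
  (forall a : R, 0 <= a ->
     jn (a *: x) (a *: y) = a *: jn x y /\
     qmeet jn (a *: x) (a *: y) = a *: qmeet jn x y) /\
  (* (3) *)
  (forall a : R, a <= 0 ->
     jn (a *: x) (a *: y) = a *: qmeet jn x y /\
     qmeet jn (a *: x) (a *: y) = a *: jn x y) /\
  (* (4) *)
  (jn x y + z = jn (x + z) (y + z) /\
   qmeet jn x y + z = qmeet jn (x + z) (y + z)) /\
  (* (5) *)
  (cle C 0 (qpos jn x) /\ cle C 0 (qneg jn x) /\ qneg jn x = qpos jn (- x)) /\
  (* (6) *)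
  (cle C 0 (qceil jn x) /\
   (forall a : R, qceil jn (a *: x) = `|a| *: qceil jn x) /\
   qceil jn (- x) = qceil jn x) /\
  (* (7) *)
  (x = qpos jn x - qneg jn x /\ qmeet jn (qpos jn x) (qneg jn x) = 0 /\
   qceil jn x = qpos jn x + qneg jn x) /\
  (* (8) *)
  (cle C 0 x -> qmeet jn x 0 = 0 /\ x = qpos jn x /\ x = qceil jn x) /\
  (* (9) *)
  (qceil jn (qceil jn x) = qceil jn x) /\
  (* (10) *)
  (jn x y + qmeet jn x y = x + y /\ jn x y - qmeet jn x y = qceil jn (x - y)) /\
  (* (11) *)
  (jn x y = 2^-1 *: (x + y) + 2^-1 *: qceil jn (x - y) /\
   qmeet jn x y = 2^-1 *: (x + y) - 2^-1 *: qceil jn (x - y)).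
Proof.
move=> x y z.
have ceil0 : forall v : X, cle C 0 (qceil jn v).
  move=> v; have [h1 h2] := jn_ubs HQ (-v) v.
  have := cle_add HQ h1 h2.
  rewrite opprK addrACA subrr addr0 -two => h.
  rewrite /cle subr0 -(half (qceil jn v)).
  case: HQ => [[_ hs] _]; apply: hs => //; by rewrite invr_ge0 ler0n.
have Hnn : forall v : X, cle C 0 v ->
    qmeet jn v 0 = 0 /\ v = qpos jn v /\ v = qceil jn v.
  move=> v hv; have hv' : C v by move: hv; rewrite /cle subr0.
  split; last split.
  - rewrite /qmeet oppr0 (jn_top HQ) //; first by rewrite oppr0.
    by rewrite /cle sub0r opprK.
  - by rewrite /qpos (jn_top HQ).
  - rewrite /qceil (jn_top HQ) //; rewrite /cle opprK.
    case: HQ => [[ha _] _]; exact: ha.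
have HP : qneg jn x = qpos jn x - x.
  have H := jn_tr HQ 0 (-x) x; rewrite add0r addNr (jn_sym HQ 0 x) in H.
  by rewrite /qneg /qpos H addrK.
split; first by rewrite /qmeet !(jn_self HQ) // opprK.
split.
  move=> a ha; split; first exact: (jn_scale0 HQ).
  by rewrite /qmeet -!scalerN (jn_scale0 HQ) // scalerN.
split.
  move=> a ha; have ha' : 0 <= -a by rewrite oppr_ge0.
  have E : forall v : X, a *: v = (-a) *: (-v)
    by move=> v; rewrite scaleNr scalerN opprK.
  split.
    by rewrite (E x) (E y) (jn_scale0 HQ) // /qmeet scaleNr scalerN.
  by rewrite /qmeet -!scaleNr (jn_scale0 HQ) // scaleNr opprK.
split; first by rewrite (jn_tr HQ) // (qmeet_tr HQ).
split.
  split; first by have [] := jn_ubs HQ 0 x.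
  by split; first by have [] := jn_ubs HQ 0 (-x).
split.
  split; first exact: ceil0.
  split; last by rewrite /qceil opprK (jn_sym HQ).
  move=> a; have [ha|ha] := leP 0 a.
    by rewrite /qceil -scalerN (jn_scale0 HQ) // ger0_norm.
  have ha' : 0 <= -a by rewrite oppr_ge0 ltW.
  have E1 : -(a *: x) = (-a) *: x by rewrite scaleNr.
  have E2 : a *: x = (-a) *: (-x) by rewrite scaleNr scalerN opprK.
  by rewrite /qceil E1 E2 (jn_scale0 HQ) // ltr0_norm // (jn_sym HQ).
split.
  split; first by rewrite HP opprB addrC subrK.
  split.
    rewrite HP (addrC _ (-x)) -{1}[qpos jn x]add0r (qmeet_tr HQ).
    by rewrite /qmeet oppr0 opprK /qpos addNr.
  have := jn_aff HQ (-x) 0 x (ltr0Sn R 1).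
  rewrite /aff scaler0 add0r two addrK /qceil => ->.
  by rewrite HP two addrA.
split; first exact: Hnn.
split; first by have [_ [_ <-]] := Hnn _ (ceil0 x).
have QM := qm_eq HQ x y; have QC := qc_eq HQ x y.
split.
  split; first by rewrite QM addrC subrK.
  by rewrite QC QM opprB addrA two.
split.
  by rewrite QC -scalerDr addrC subrK half.
rewrite QC QM -scalerBr opprB addrA -(two (x + y)) -scalerBr half //.
Qed.
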